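(* Let $\Delta$ be a simplicial polytopal fan in $\mathbb{R}^d$ with ray generators $\mathbf{v}_1,\ldots,\mathbf{v}_n$, let $\{(\mathbf{u}^{(i)},y^{(i)})\}_{i=1}^m\subset\mathbb{R}^d\times\mathbb{R}$ be a data set, $U=(\mathbf{u}^{(1)},\ldots,\mathbf{u}^{(m)})^\mathsf{T}$ and $\mathbf{y}=(y^{(1)},\ldots,y^{(m)})^\mathsf{T}$. Then \[ \hat{P}^\Delta(U,\mathbf{y})=\operatorname{argmin}_{P(\mathbf{h})\in\mathcal{P}(\Delta)}\|A_U\mathbf{h}-\mathbf{y}\|. \] Equivalently, \[ \hat{P}^\Delta(U,\mathbf{y})=\mathcal{P}(\Delta)\cap\{\mathbf{h}\in\mathbb{R}^n\colon A_U\mathbf{h}=\hat{\mathbf{y}}\}, \] where $\hat{\mathbf{y}}\in A_U\mathcal{P}(\Delta)$ is the unique point of $A_U\mathcal{P}(\Delta)$ of minimal distance to $\mathbf{y}$. In particular, the solution set $\hat{P}^\Delta(U,\mathbf{y})$ is a non-empty polyhedron in $\mathbb{R}^n$.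
   Context: A fan is simplicial if every cone is generated by linearly independent vectors; it is polytopal if it is the normal fan of a polytope (so its support is $\mathbb{R}^d$). The support function of a convex body $P$ is $h_P(\mathbf{u})=\max_{\mathbf{x}\in P}\langle\mathbf{x},\mathbf{u}\rangle$. For $\mathbf{h}\in\mathbb{R}^n$ let $P(\mathbf{h})=\{\mathbf{x}\in\mathbb{R}^d\colon\langle\mathbf{x},\mathbf{v}_i\rangle\le h_i,\ i=1,\ldots,n\}$. The deformation cone $\mathcal{P}(\Delta)$ is the set of all polytopes whose normal fan is a coarsening of $\Delta$ (every cone of their normal fan is a union of cones of $\Delta$); such a polytope $P$ equals $P(\mathbf{h})$ for its support vector $\mathbf{h}=(h_P(\mathbf{v}_1),\ldots,h_P(\mathbf{v}_n))$, and via $P(\mathbf{h})\mapsto\mathbf{h}$ the set $\mathcal{P}(\Delta)$ is identified with a closed full-dimensional polyhedral cone in $\mathbb{R}^n$. For $\mathbf{u}\in\mathbb{R}^d$ let $\sigma$ be the unique cone of $\Delta$ with $\mathbf{u}$ in its relative interior, $I_\sigma$ the index set of its generators, and write $\mathbf{u}=\sum_{k\in I_\sigma}\lambda_k\mathbf{v}_k$; define $[\mathbf{u}]\in\mathbb{R}^n$ by $[\mathbf{u}]_i=\lambda_i$ for $i\in I_\sigma$ and $0$ otherwise. $A_U\in\mathbb{R}^{m\times n}$ is the matrix with rows $[\mathbf{u}^{(1)}]^\mathsf{T},\ldots,[\mathbf{u}^{(m)}]^\mathsf{T}$. The least-squares estimator is $\hat{P}^\Delta(U,\mathbf{y})=\operatorname{argmin}_{P\in\mathcal{P}(\Delta)}\frac1m\sum_{i=1}^m(h_P(\mathbf{u}^{(i)})-y^{(i)})^2$,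 regarded as a set of support vectors in $\mathbb{R}^n$. *)

(* Defs.v *)
From HB Require Import structures.
From mathcomp Require Import all_boot all_order all_algebra.
From mathcomp Require Import boolp classical_sets reals.
From Stdlib Require Import ClassicalEpsilon.

Set Implicit Arguments.
Unset Strict Implicit.
Unset Printing Implicit Defensive.

Import Order.TTheory GRing.Theory Num.Theory.
Local Open Scope ring_scope.
Local Open Scope classical_set_scope.

Section PolyFan.
Variables (R : realType) (d n : nat).

Definition dotv (x u : 'rV[R]_d) : R := \sum_(j < d) x 0 j * u 0 j.

Definition conv (pts : seq 'rV[R]_d) : set 'rV[R]_d :=
  [set x | exists lam : 'I_(size pts) -> R,
     (forall k, 0 <= lam k) /\ \sum_k lam k = 1 /\
     x = \sum_k lam k *: pts`_k].

Definition suppf (P : set 'rV[R]_d) (u : 'rV[R]_d) : R :=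
  sup [set dotv x u | x in P].

Definition normal_cone (P : set 'rV[R]_d) (x : 'rV[R]_d) : set 'rV[R]_d :=
  [set u | forall y, P y -> dotv y u <= dotv x u].

(** The normal fan of a polytope P, as a family of cones (one per point of P,
    i.e. the normal cones of the nonempty faces of P). *)
Definition normal_fan (P : set 'rV[R]_d) : set (set 'rV[R]_d) :=
  [set C | exists2 x, P x & C = normal_cone P x].

Variable v : 'I_n -> 'rV[R]_d.

Definition gcone (S : {set 'I_n}) : set 'rV[R]_d :=
  [set u | exists lam : 'I_n -> R,
     (forall i, 0 <= lam i) /\ (forall i, i \notin S -> lam i = 0) /\
     u = \sum_i lam i *: v i].

Definition lin_indep (S : {set 'I_n}) : Prop :=
  forall lam : 'I_n -> R, (forall i, i \notin S -> lam i = 0) ->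
    \sum_i lam i *: v i = 0 -> forall i, lam i = 0.

Definition face_of (C F : set 'rV[R]_d) : Prop :=
  exists w : 'rV[R]_d, (forall u, C u -> dotv w u <= 0) /\
                       F = C `&` [set u | dotv w u = 0].

(** Delta (a family of index sets S, standing for the cones gcone S) is a
    simplicial fan whose rays are exactly the distinct rays spanned by
    v_1, ..., v_n. *)
Definition simplicial_fan (Delta : {set {set 'I_n}}) : Prop :=
  [/\ (forall S, S \in Delta -> forall F, face_of (gcone S) F ->
          exists2 T, T \in Delta & F = gcone T),
      (forall S T, S \in Delta -> T \in Delta ->
          face_of (gcone S) (gcone S `&` gcone T) /\
          face_of (gcone T) (gcone S `&` gcone T)),
      (forall S, S \in Delta -> lin_indep S),
      (forall i, [set i]%SET \in Delta) &
      (forall i j, gcone [set i]%SET = gcone [set j]%SET -> i = j)].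

Definition polytopal (Delta : {set {set 'I_n}}) : Prop :=
  exists2 pts : seq 'rV[R]_d, pts != [::] &
    normal_fan (conv pts) = [set C | exists2 S, S \in Delta & C = gcone S].

Definition coarsens (Delta : {set {set 'I_n}}) (P : set 'rV[R]_d) : Prop :=
  forall C, normal_fan P C ->
    exists F : {set {set 'I_n}}, F \subset Delta /\
      C = [set u | exists2 S, S \in F & gcone S u].

(** Polytopes (given by a nonempty finite vertex list) in the deformation
    cone P(Delta). *)
Definition in_defcone (Delta : {set {set 'I_n}}) (pts : seq 'rV[R]_d) : Prop :=
  pts != [::] /\ coarsens Delta (conv pts).

Definition supvec (P : set 'rV[R]_d) : 'cV[R]_n := \col_i suppf P (v i).

(** The deformation cone, as a subset of R^n (via P |-> its support vector). *)
Definition defcone (Delta : {set {set 'I_n}}) : set 'cV[R]_n :=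
  [set supvec (conv pts) | pts in in_defcone Delta].

(** [u] : coefficient vector of u with respect to the generators of the unique
    cone of Delta containing u in its relative interior (for a simplicial
    cone, relative interior = strictly positive combinations). *)
Definition is_coords (Delta : {set {set 'I_n}}) (u : 'rV[R]_d)
  (lam : 'cV[R]_n) : Prop :=
  exists2 S, S \in Delta &
    [/\ forall i, i \in S -> 0 < lam i 0,
        forall i, i \notin S -> lam i 0 = 0 &
        u = \sum_i lam i 0 *: v i].

Definition coords (Delta : {set {set 'I_n}}) (u : 'rV[R]_d) : 'cV[R]_n :=
  epsilon (inhabits 0) (is_coords Delta u).

Definition AU (Delta : {set {set 'I_n}}) (m : nat) (U : 'I_m -> 'rV[R]_d)
  : 'M[R]_(m, n) := \matrix_(k, i) coords Delta (U k) i 0.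

Definition ls_obj (m : nat) (U : 'I_m -> 'rV[R]_d) (y : 'cV[R]_m)
  (P : set 'rV[R]_d) : R :=
  m%:R^-1 * \sum_k (suppf P (U k) - y k 0) ^+ 2.

Definition lse (Delta : {set {set 'I_n}}) (m : nat) (U : 'I_m -> 'rV[R]_d)
  (y : 'cV[R]_m) : set 'cV[R]_n :=
  [set h | exists pts, [/\ in_defcone Delta pts,
     h = supvec (conv pts) &
     forall pts', in_defcone Delta pts' ->
       ls_obj U y (conv pts) <= ls_obj U y (conv pts')]].

End PolyFan.

Definition enorm (R : realType) (m : nat) (w : 'cV[R]_m) : R :=
  Num.sqrt (\sum_k w k 0 ^+ 2).

Definition polyhedron (R : realType) (n : nat) (Q : set 'cV[R]_n) : Prop :=
  exists (k : nat) (C : 'M[R]_(k, n)) (b : 'cV[R]_k),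
    Q = [set h | forall r, (C *m h) r 0 <= b r 0].

(* Main.v *)
Require Import Defs.
From HB Require Import structures.
From mathcomp Require Import all_boot all_order all_algebra.
From mathcomp Require Import boolp classical_sets reals.
From mathcomp Require Import ring lra zify.
From Stdlib Require Import ClassicalEpsilon.

Set Implicit Arguments.
Unset Strict Implicit.
Unset Printing Implicit Defensive.
Import Order.TTheory GRing.Theory Num.Theory.
Local Open Scope ring_scope.
Local Open Scope classical_set_scope.

Section Basics.
Variables (R : realType) (d : nat).
Implicit Types x u w : 'rV[R]_d.

Lemma dotvC x u : dotv x u = dotv u x.
Proof. by apply: eq_bigr => j _; rewrite mulrC. Qed.

Lemma dotvDl x y u : dotv (x + y) u = dotv x u + dotv y u.
Proof. by rewrite /dotv -big_split; apply: eq_bigr => j _; rewrite mxE mulrDl. Qed.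

Lemma dotvZl (a : R) x u : dotv (a *: x) u = a * dotv x u.
Proof. by rewrite /dotv mulr_sumr; apply: eq_bigr => j _; rewrite mxE mulrA. Qed.

Lemma dotvNl x u : dotv (- x) u = - dotv x u.
Proof. by rewrite -scaleN1r dotvZl mulN1r. Qed.

Lemma dotvBl x y u : dotv (x - y) u = dotv x u - dotv y u.
Proof. by rewrite dotvDl dotvNl. Qed.

Lemma dotv0l u : dotv 0 u = 0.
Proof. by rewrite /dotv big1 // => j _; rewrite mxE mul0r. Qed.

Lemma dotv_suml (I : finType) (P : pred I) (F : I -> 'rV[R]_d) u :
  dotv (\sum_(i | P i) F i) u = \sum_(i | P i) dotv (F i) u.
Proof.
rewrite /dotv; under eq_bigr do rewrite summxE mulr_suml.
by rewrite exchange_big.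
Qed.

Lemma dotvDr x u w : dotv x (u + w) = dotv x u + dotv x w.
Proof. by rewrite dotvC dotvDl !(dotvC x). Qed.
Lemma dotvZr (a : R) x u : dotv x (a *: u) = a * dotv x u.
Proof. by rewrite dotvC dotvZl dotvC. Qed.
Lemma dotvBr x u w : dotv x (u - w) = dotv x u - dotv x w.
Proof. by rewrite dotvC dotvBl !(dotvC x). Qed.
Lemma dotv_sumr (I : finType) (P : pred I) (F : I -> 'rV[R]_d) x :
  dotv x (\sum_(i | P i) F i) = \sum_(i | P i) dotv x (F i).
Proof. by rewrite dotvC dotv_suml; apply: eq_bigr => i _; rewrite dotvC. Qed.
Lemma dotv0r x : dotv x 0 = 0.
Proof. by rewrite dotvC dotv0l. Qed.

Lemma dotvv_ge0 x : 0 <= dotv x x.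
Proof. by apply: sumr_ge0 => j _; rewrite -expr2 sqr_ge0. Qed.

Lemma dotvv_eq0 x : dotv x x = 0 -> x = 0.
Proof.
move=> /eqP; rewrite psumr_eq0; last by move=> j _; rewrite -expr2 sqr_ge0.
move=> /allP H; apply/rowP => j; rewrite mxE.
have := H j (mem_index_enum j); rewrite /= mulf_eq0 orbb => /eqP //.
Qed.

Lemma dotvE x u : dotv x u = (x *m u^T) 0 0.
Proof. by rewrite mxE; apply: eq_bigr => j _; rewrite mxE. Qed.

End Basics.


Section Opt.
Variable R : realType.

Definition nsq (m : nat) (w : 'cV[R]_m) : R := \sum_k w k 0 ^+ 2.

Lemma nsq_ge0 m (w : 'cV[R]_m) : 0 <= nsq w.
Proof. by apply: sumr_ge0 => k _; rewrite sqr_ge0. Qed.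

Lemma nsq_eq0 m (w : 'cV[R]_m) : nsq w = 0 -> w = 0.
Proof.
move=> /eqP; rewrite psumr_eq0; last by move=> j _; rewrite sqr_ge0.
move=> /allP H; apply/matrixP => i j; rewrite mxE (ord1 j).
by have := H i (mem_index_enum i); rewrite /= sqrf_eq0 => /eqP.
Qed.

Lemma enorm_le m (a b : 'cV[R]_m) : (enorm a <= enorm b) = (nsq a <= nsq b).
Proof. by rewrite /enorm ler_sqrt // nsq_ge0. Qed.

Lemma nsqE m (w : 'cV[R]_m) : nsq w = (w^T *m w) 0 0.
Proof. by rewrite mxE; apply: eq_bigr => k _; rewrite mxE expr2. Qed.

Lemma nsqD m (a b : 'cV[R]_m) :
  nsq (a + b) = nsq a + nsq b + 2 * (a^T *m b) 0 0.
Proof.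
rewrite /nsq mxE mulr_sumr -!big_split; apply: eq_bigr => k _ /=.
by rewrite !mxE; ring.
Qed.

Lemma nsqZ m (c : R) (a : 'cV[R]_m) : nsq (c *: a) = c ^+ 2 * nsq a.
Proof. by rewrite /nsq mulr_sumr; apply: eq_bigr => k _; rewrite mxE exprMn. Qed.

Lemma nsq_conv m (t : R) (a b : 'cV[R]_m) : 0 <= t <= 1 ->
  nsq ((1 - t) *: a + t *: b) <= (1 - t) * nsq a + t * nsq b.
Proof.
move=> /andP[t0 t1]; rewrite /nsq !mulr_sumr -big_split; apply: ler_sum => k _ /=.
rewrite !mxE.
have : 0 <= t * (1 - t) * (a k 0 - b k 0) ^+ 2.
  by rewrite mulr_ge0 ?sqr_ge0 // mulr_ge0 // subr_ge0.
move=> H. rewrite -subr_ge0. 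
have -> : (1 - t) * a k 0 ^+ 2 + t * b k 0 ^+ 2 - ((1 - t) * a k 0 + t * b k 0) ^+ 2
   = t * (1 - t) * (a k 0 - b k 0) ^+ 2 by ring.
done.
Qed.

Lemma mxmxT_eq0 p m (X : 'M[R]_(p, m)) : X *m X^T = 0 -> X = 0.
Proof.
move=> H; apply/matrixP => i j; rewrite mxE.
have := congr1 (fun M : 'M[R]_p => M i i) H; rewrite !mxE.
under eq_bigr do rewrite mxE.
move=> /eqP; rewrite psumr_eq0; last by move=> k _; rewrite -expr2 sqr_ge0.
move=> /allP /(_ j (mem_index_enum j)) /=.
by rewrite mulf_eq0 orbb => /eqP.
Qed.

Lemma lsq_exists m p (M : 'M[R]_(m, p)) (y : 'cV[R]_m) :
  exists z, (M^T *m M) *m z = M^T *m y.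
Proof.
set N := M^T *m M.
have NM : (N <= M)%MS by apply: submxMl.
have KN : (kermx N <= kermx M^T)%MS.
  rewrite sub_kermx; apply/eqP; apply: mxmxT_eq0.
  rewrite trmx_mul trmxK mulmxA -(mulmxA _ _ M) -/N.
  by rewrite mulmx_ker mul0mx.
have rk : (\rank M <= \rank N)%N.
  have := mxrankS KN; rewrite !mxrank_ker mxrank_tr.
  have := rank_leq_row N; have := rank_leq_col M. lia.
have MN : (M <= N)%MS.
  have := (mxrank_leqif_eq NM).2.
  have -> : (\rank N == \rank M) = true.
    by apply/eqP; apply/eqP; rewrite eqn_leq rk andbT mxrankS.
  by move=> /esym /andP[].
have : ((y^T *m M) <= N)%MS by apply: submx_trans (submxMl _ _) MN.
move=> /submxP[D HD]; exists D^T.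
have NT : N^T = N by rewrite /N trmx_mul trmxK.
by rewrite -NT -trmx_mul -HD trmx_mul trmxK.
Qed.
Lemma lsq_min m p (M : 'M[R]_(m, p)) (y : 'cV[R]_m) :
  exists z, forall z', nsq (M *m z - y) <= nsq (M *m z' - y).
Proof.
have [z Hz] := lsq_exists M y; exists z => z'.
have -> : M *m z' - y = (M *m z - y) + M *m (z' - z).
  by rewrite mulmxBr; apply/matrixP => i j; rewrite !mxE; ring.
rewrite [X in _ <= X]nsqD.
have -> : ((M *m z - y)^T *m (M *m (z' - z))) = (M^T *m (M *m z - y))^T *m (z' - z).
  by rewrite trmx_mul trmxK -mulmxA.
rewrite (mulmxBr M^T) mulmxA Hz subrr trmx0 mul0mx mxE mulr0 addr0.
by rewrite lerDl nsq_ge0.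
Qed.

Lemma sub_min k p m (G : 'M[R]_(k, p)) (A : 'M[R]_(m, p)) (y : 'cV[R]_m) :
  exists h, G *m h = 0 /\
    forall h', G *m h' = 0 -> nsq (A *m h - y) <= nsq (A *m h' - y).
Proof.
set K := (kermx G^T)^T.
have GK z : G *m (K *m z) = 0.
  by rewrite mulmxA -[G]trmxK -trmx_mul mulmx_ker trmx0 mul0mx.
have [z Hz] := lsq_min (A *m K) y.
exists (K *m z); split => // h' Gh'.
have : (h'^T <= kermx G^T)%MS by rewrite sub_kermx -trmx_mul Gh' trmx0.
move=> /submxP[D HD].
have -> : h' = K *m D^T by rewrite /K -trmx_mul -HD trmxK.
by rewrite !mulmxA.
Qed.

Lemma fin_argmin (I : finType) (P : pred I) (F : I -> R) (i0 : I) : P i0 ->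
  exists i, P i /\ forall j, P j -> F i <= F j.
Proof.
move=> Pi0; case: (arg_minP F Pi0) => i Pi Hi; exists i; split => //.
Qed.

Section ExMin.
Variables (k p m : nat) (C : 'M[R]_(k, p)) (A : 'M[R]_(m, p)) (y : 'cV[R]_m).
Let f (h : 'cV[R]_p) := nsq (A *m h - y).
Let FJ (J : {set 'I_k}) (h : 'cV[R]_p) := (forall r, (C *m h) r 0 <= 0) /\ (forall r, r \in J -> (C *m h) r 0 = 0).
Let LJ (J : {set 'I_k}) (h : 'cV[R]_p) := forall r, r \in J -> (C *m h) r 0 = 0.

Lemma LJ_min J : exists h, LJ J h /\ forall h', LJ J h' -> f h <= f h'.
Proof.
set G := \matrix_(r, i) (if r \in J then C r i else 0).
have GE h : (G *m h = 0) <-> LJ J h.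
  have E r : (G *m h) r 0 = if r \in J then (C *m h) r 0 else 0.
    rewrite !mxE; case: ifP => rJ; first by apply: eq_bigr => i _; rewrite mxE rJ.
    by rewrite big1 // => i _; rewrite mxE rJ mul0r.
  split.
    by move=> H r rJ; have := E r; rewrite H rJ mxE => <-.
  move=> H; apply/matrixP => r j; rewrite (ord1 j) E [X in _ = X]mxE; case: ifP => // rJ.
  exact: (H r rJ).
have [h [Gh Hh]] := sub_min G A y.
exists h; split; first by apply/GE.
by move=> h' /GE; apply: Hh.
Qed.

Lemma f_conv h h' t : 0 <= t <= 1 -> f ((1 - t) *: h + t *: h') <= (1 - t) * f h + t * f h'.
Proof.
move=> Ht; rewrite /f.
have -> : A *m ((1 - t) *: h + t *: h') - y = (1 - t) *: (A *m h - y) + t *: (A *m h' - y).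
  rewrite mulmxDr -!scalemxAr; apply/matrixP => i j; rewrite !mxE; ring.
exact: nsq_conv.
Qed.

Lemma FJ_min N J : (#|~: J| < N)%N -> exists h, FJ J h /\ forall h', FJ J h' -> f h <= f h'.
Proof.
elim: N J => [//|N IH] J HN.
have [hs [Lhs Hhs]] := LJ_min J.
case: (pselect (forall r, (C *m hs) r 0 <= 0)) => [Hall|].
  exists hs; split; first by split.
  by move=> h' [_ H']; apply: Hhs.
move=> /existsNP[r0] /negP; rewrite -ltNge => Hr0.
have r0J : r0 \notin J.
  by apply/negP => /Lhs E; move: Hr0; rewrite E ltxx.
have Hex : forall r, exists g : 'cV[R]_p, r \notin J -> FJ (r |: J) g /\ forall h', FJ (r |: J) h' -> f g <= f h'.
  move=> r; case: (boolP (r \notin J)) => rJ; last by exists 0.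
  have : (#|~: (r |: J)| < N)%N.
    have : ~: (r |: J) \proper ~: J.
      rewrite properC properE finset.subsetU1 /=; apply/negP => /fintype.subsetP /(_ r).
      by rewrite in_setU1 eqxx /= => /(_ isT); apply/negP.
    by move=> /proper_card; lia.
  by move=> /IH[g Hg']; exists g.
have [g Hg] := @choice _ _ _ Hex.
have [r1 [r1J Hr1]] := fin_argmin (P := fun r => r \notin J) (fun r => f (g r)) r0J.
have [Fg1 Mg1] := Hg r1 r1J.
exists (g r1); split.
  split; first by case: Fg1.
  by move=> r rJ; apply: Fg1.2; rewrite in_setU1 rJ orbT.
move=> h [Ch ChJ].
pose a : 'I_k -> R := fun r => (C *m h) r 0.
pose b : 'I_k -> R := fun r => (C *m hs) r 0.
pose tr r := a r / (a r - b r).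
have [r2 [Hr2 Hr2m]] := fin_argmin (P := fun r => 0 < b r) tr Hr0.
pose t := tr r2.
simpl in Hr2.
have ab r : 0 < b r -> a r - b r < 0.
  by move=> Hb; have := Ch r; rewrite /a; lra.
have t0 : 0 <= t.
  by rewrite /t /tr ler_ndivlMr ?ab // mul0r; apply: Ch.
have t1 : t <= 1.
  rewrite /t /tr ler_ndivrMr ?ab // mul1r.
  by have := Hr2; lra.
pose ht := (1 - t) *: h + t *: hs.
have Cht r : (C *m ht) r 0 = (1 - t) * a r + t * b r.
  by rewrite /ht /a /b mulmxDr -!scalemxAr !mxE.
have Fht : FJ (r2 |: J) ht.
  split.
    move=> r; rewrite Cht.
    case: (ltrP 0 (b r)) => Hb.
      have Htr := Hr2m r Hb.
      have abr := ab r Hb.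
      have : tr r * (a r - b r) = a r by rewrite /tr mulfVK // lt_eqF.
      have : t * (a r - b r) >= tr r * (a r - b r) by move: (ler_wnM2r (ltW abr) Htr) => /= HH; exact: HH.
      lra.
    have := Ch r; rewrite -/(a r).
    move=> Ha; have : 0 <= 1 - t by lra.
    move=> H1; have := mulr_ge0_le0 H1 Ha; have := mulr_ge0_le0 t0 Hb.
    lra.
  move=> r; rewrite in_setU1 => /orP[/eqP ->|rJ].
    rewrite Cht.
    have abr := ab r2 Hr2.
    have : t * (a r2 - b r2) = a r2 by rewrite /t /tr mulfVK // lt_eqF.
    lra.
  by rewrite Cht /a /b ChJ // Lhs // !mulr0 addr0.
have r2J : r2 \notin J.
  by apply/negP => /Lhs E; move: Hr2; rewrite /b E ltxx.
have le1 := Hr1 r2 r2J.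
have le2 := (Hg r2 r2J).2 ht Fht.
have le3 := f_conv h hs (t := t) (introT andP (conj t0 t1)).
have le4 := Hhs h ChJ.
have le5 := ler_wpM2l t0 le4.
rewrite -/ht in le3.
lra.
Qed.

Lemma exmin : exists h, (forall r, (C *m h) r 0 <= 0) /\
  forall h', (forall r, (C *m h') r 0 <= 0) -> f h <= f h'.
Proof.
have [h [[H1 _] H2]] := @FJ_min (#|~: (finset.set0 : {set 'I_k})|).+1 finset.set0 (ltnSn _).
exists h; split => // h' H'; apply: H2; split => // r; by rewrite finset.in_set0.
Qed.

End ExMin.
End Opt.


Section Final.
Variable R : realType.

Lemma colmx_le m1 m2 (X X' : 'cV[R]_m1) (Y Y' : 'cV[R]_m2) :
  (forall r, col_mx X Y r 0 <= col_mx X' Y' r 0) <->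
  (forall r, X r 0 <= X' r 0) /\ (forall r, Y r 0 <= Y' r 0).
Proof.
split.
  move=> H; split => r.
    by have := H (lshift m2 r); rewrite !col_mxEu.
  by have := H (rshift m1 r); rewrite !col_mxEd.
move=> [H1 H2] r; case: (splitP r) => j Hj.
  have -> : r = lshift m2 j by apply: val_inj.
  by rewrite !col_mxEu.
have -> : r = rshift m1 j by apply: val_inj.
by rewrite !col_mxEd.
Qed.

Lemma polyhedron_cap_eq n m k (C : 'M[R]_(k, n)) (A : 'M[R]_(m, n)) (yh : 'cV[R]_m) :
  polyhedron ([set h | forall r, (C *m h) r 0 <= 0] `&` [set h | A *m h = yh]).
Proof.
exists (k + (m + m))%N, (col_mx C (col_mx A (- A))), (col_mx 0 (col_mx yh (- yh))).
apply/seteqP; split => h /=.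
  move=> [HC HA]; rewrite !mul_col_mx; apply/colmx_le; split.
    by move=> r; rewrite [X in _ <= X]mxE; apply: HC.
  apply/colmx_le; split => r; first by rewrite HA.
  by rewrite mulNmx HA.
rewrite !mul_col_mx => /colmx_le[HC] /colmx_le[H1 H2]; split.
  by move=> r; have := HC r; rewrite [X in _ <= X]mxE.
apply/matrixP => r j; rewrite (ord1 j); apply/eqP; rewrite eq_le H1 /=.
by have := H2 r; rewrite mulNmx !mxE lerN2.
Qed.

Lemma nsq_par m (a b : 'cV[R]_m) : nsq (a + b) + nsq (a - b) = 2 * nsq a + 2 * nsq b.
Proof.
rewrite !nsqD.
have -> : nsq (- b) = nsq b by rewrite /nsq; apply: eq_bigr => i _; rewrite mxE sqrrN.
have E : (- (a^T *m b)) 0 0 = - (a^T *m b) 0 0 by rewrite mxE.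
rewrite mulmxN E; ring.
Qed.

Theorem final n m k (A : 'M[R]_(m, n)) (y : 'cV[R]_m) (C : 'M[R]_(k, n))
  (D L : set 'cV[R]_n) :
  D = [set h | forall r, (C *m h) r 0 <= 0] ->
  L = [set h | D h /\ forall h', D h' -> enorm (A *m h - y) <= enorm (A *m h' - y)] ->
  let ismin := fun z : 'cV[R]_m =>
    (exists2 h, D h & z = A *m h) /\
    (forall h, D h -> enorm (z - y) <= enorm (A *m h - y)) in
  [/\ L = [set h | D h /\ forall h', D h' -> enorm (A *m h - y) <= enorm (A *m h' - y)],
      (exists yh, ismin yh) /\ (forall z1 z2, ismin z1 -> ismin z2 -> z1 = z2),
      (forall yh, ismin yh -> L = D `&` [set h | A *m h = yh]) &
      (exists h, L h) /\ polyhedron L].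
Proof.
move=> HD HL ismin.
have [hs [Dhs Mhs]] := exmin C A y.
have Dhs' : D hs by rewrite HD.
have ex : ismin (A *m hs).
  split; first by exists hs.
  by move=> h Dh; rewrite enorm_le; apply: Mhs; move: Dh; rewrite HD.
have uniq : forall z1 z2, ismin z1 -> ismin z2 -> z1 = z2.
  move=> z1 z2 [[h1 D1 ->] M1] [[h2 D2 ->] M2].
  set a := A *m h1 - y; set b := A *m h2 - y.
  have eab : nsq a = nsq b.
    apply/eqP; rewrite eq_le -!enorm_le; apply/andP; split; [exact: M1|exact: M2].
  pose hm := 2^-1 *: (h1 + h2).
  have Dm : D hm.
    move: D1 D2; rewrite HD /= => D1 D2 r.
    rewrite /hm -scalemxAr mulmxDr.
    have -> : (2^-1 *: (C *m h1 + C *m h2)) r 0 = 2^-1 * ((C *m h1) r 0 + (C *m h2) r 0) by rewrite !mxE.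
    apply: mulr_ge0_le0; first by rewrite invr_ge0 ler0n.
    by have := D1 r; have := D2 r; lra.
  have := M1 _ Dm; rewrite enorm_le.
  have -> : A *m hm - y = 2^-1 *: (a + b).
    rewrite /hm /a /b -scalemxAr mulmxDr; apply/matrixP => i j; rewrite !mxE; field; done.
  rewrite nsqZ => Hle.
  have Hp := nsq_par a b.
  have H0 : nsq (a - b) <= 0 by nra.
  have : nsq (a - b) = 0 by apply/eqP; rewrite eq_le H0 nsq_ge0.
  move=> /nsq_eq0 /eqP; rewrite subr_eq0 /a /b => /eqP Hab.
  by apply/eqP; rewrite -subr_eq0 -(subrK y (A *m h1)) Hab subrK subrr.
have car : forall yh, ismin yh -> L = D `&` [set h | A *m h = yh].
  move=> yh Hyh; rewrite HL; apply/seteqP; split => h /=.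
    move=> [Dh Mh]; split => //; apply: uniq Hyh; split; first by exists h.
    exact: Mh.
  move=> [Dh Ah]; split => // h' Dh'; rewrite Ah; exact: Hyh.2.
split => //.
- by split => //; exists (A *m hs).
- split.
    exists hs; rewrite HL; split => // h' Dh'; exact: ex.2.
  by rewrite (car _ ex) HD; apply: polyhedron_cap_eq.
Qed.

End Final.


Section Geo.
Variables (R : realType) (d n : nat) (v : 'I_n -> 'rV[R]_d).

Lemma sum_supp1 (lam : 'I_n -> R) i : (forall j, j != i -> lam j = 0) ->
  \sum_j lam j *: v j = lam i *: v i.
Proof.
move=> H; rewrite (bigD1 i) //= big1 ?addr0 // => j ji.
by rewrite H // scale0r.
Qed.

Lemma gcone_gen (S : {set 'I_n}) i : i \in S -> gcone v S (v i).
Proof.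
move=> iS; exists (fun j => (j == i)%:R); split.
  by move=> j; rewrite ler0n.
split; first by move=> j jS; case: eqP => // ji; move: jS; rewrite ji iS.
rewrite (sum_supp1 (i := i)) ?eqxx ?scale1r // => j /negbTE ->.
by [].
Qed.

Lemma gcone_dot (S : {set 'I_n}) (lam : 'I_n -> R) x :
  dotv x (\sum_i lam i *: v i) = \sum_i lam i * dotv x (v i).
Proof. by rewrite dotv_sumr; apply: eq_bigr => i _; rewrite dotvZr. Qed.

Lemma gcone1 i u : gcone v [set i]%SET u <-> exists2 mu : R, 0 <= mu & u = mu *: v i.
Proof.
split.
  move=> [lam [l0 [ls ->]]]; exists (lam i) => //.
  apply: sum_supp1 => j ji; apply: ls; by rewrite finset.in_set1.
move=> [mu mu0 ->]; exists (fun j => if j == i then mu else 0); split.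
  by move=> j; case: eqP.
split; first by move=> j; rewrite finset.in_set1 => /negbTE ->.
by rewrite (sum_supp1 (i := i)) ?eqxx // => j /negbTE ->.
Qed.

Lemma sum_npos_eq0 (F : 'I_n -> R) : (forall i, F i <= 0) -> \sum_i F i = 0 ->
  forall i, F i = 0.
Proof.
move=> H S i.
have : \sum_i (- F i) = 0 by rewrite sumrN S oppr0.
move=> /eqP; rewrite psumr_eq0; last by move=> j _; rewrite oppr_ge0.
move=> /allP /(_ i (mem_index_enum i)) /=; rewrite oppr_eq0 => /eqP //.
Qed.

Definition MS (S : {set 'I_n}) : 'M[R]_(#|S|, d) := \matrix_(k, j) v (enum_val k) 0 j.
Definition ES (S : {set 'I_n}) : 'M[R]_(#|S|, n) := \matrix_(k, i) ((enum_val k == i)%:R).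
Definition rinv (S : {set 'I_n}) : 'M[R]_(d, #|S|) :=
  match pselect (exists B, MS S *m B = 1%:M) with
  | left e => projT1 (cid e)
  | right _ => 0
  end.
Definition xS (S : {set 'I_n}) (h : 'cV[R]_n) : 'rV[R]_d := (rinv S *m (ES S *m h))^T.

Lemma MS_free S : lin_indep v S -> row_free (MS S).
Proof.
move=> li; apply: inj_row_free => c Hc.
case: (set_0Vmem S) => [S0|[x0 x0S]].
  by apply/rowP => k; have := ltn_ord k; rewrite {2}S0 cards0.
pose h := enum_rank_in x0S.
pose lam i := if i \in S then c 0 (h i) else 0.
have E : \sum_i lam i *: v i = 0.
  apply: etrans Hc; apply/rowP => j; rewrite summxE [RHS]mxE.
  rewrite (big_enum_rank x0S (fun k => c 0 k * MS S k j)) /= -/h.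
  rewrite [RHS]big_mkcond /=; apply: eq_bigr => i _.
  rewrite mxE /lam; case: ifP => iS; last by rewrite mul0r.
  by rewrite mxE enum_rankK_in.
have L0 : forall i, lam i = 0.
  by apply: li E => i iS; rewrite /lam (negbTE iS).
apply/rowP => k; rewrite mxE; have := L0 (enum_val k).
by rewrite /lam enum_valP /h enum_valK_in.
Qed.

Lemma MS_mul S (w : 'cV[R]_d) k : (MS S *m w) k 0 = dotv (v (enum_val k)) w^T.
Proof. by rewrite mxE; apply: eq_bigr => j _; rewrite !mxE. Qed.

Lemma ES_mul S (h : 'cV[R]_n) k : (ES S *m h) k 0 = h (enum_val k) 0.
Proof.
rewrite mxE (bigD1 (enum_val k)) //= mxE eqxx mul1r big1 ?addr0 // => i ki.
by rewrite mxE eq_sym (negbTE ki) mul0r.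
Qed.

Lemma rinvK S : lin_indep v S -> MS S *m rinv S = 1%:M.
Proof.
move=> /MS_free /row_freeP ex; rewrite /rinv; case: pselect => // e.
exact: (projT2 (cid e)).
Qed.

Lemma xS_dot S h i : lin_indep v S -> i \in S -> dotv (xS S h) (v i) = h i 0.
Proof.
move=> li iS; have -> : i = enum_val (enum_rank_in iS i) by rewrite enum_rankK_in.
rewrite dotvC -[xS S h]trmxK -MS_mul /xS trmxK mulmxA rinvK // mul1mx.
exact: ES_mul.
Qed.

Definition cr S j : 'rV[R]_n := v j *m rinv S *m ES S - 'e_j.

Lemma cr_mul S j h : (cr S j *m h) 0 0 = dotv (xS S h) (v j) - h j 0.
Proof.
rewrite /cr mulmxBl -rowE dotvC dotvE /xS trmxK !mulmxA.
by rewrite !mxE.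
Qed.

Lemma sum_seq_ge (T : eqType) (s : seq T) (F : T -> R) b :
  (forall x, 0 <= F x) -> b \in s -> F b <= \sum_(x <- s) F x.
Proof.
move=> F0; elim: s => [//|x s IH]; rewrite in_cons big_cons => /orP[/eqP ->|bs].
  by rewrite lerDl sumr_ge0.
by apply: le_trans (IH bs) _; rewrite lerDr.
Qed.

Lemma gen_dir (s : seq 'rV[R]_d) : exists u', forall a, a \in s -> a != 0 -> dotv a u' != 0.
Proof.
elim: s => [|a s [u' IH]]; first by exists 0.
case: (boolP ((a == 0) || (dotv a u' != 0))) => [Ha|].
  exists u' => b; rewrite in_cons => /orP[/eqP ->|bs]; last exact: IH.
  by case/orP: Ha => [/eqP -> /eqP|//].
rewrite negb_or negbK => /andP[a0 /eqP au].
pose eps := 1 + \sum_(b <- s) `|dotv b u' / dotv b a|.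
have eps0 : 0 < eps by rewrite ltr_pwDl // sumr_ge0.
have aa : 0 < dotv a a.
  rewrite lt_def dotvv_ge0 andbT; apply/eqP => /dotvv_eq0 /eqP; exact/negP.
exists (u' + eps *: a) => b; rewrite in_cons => /orP[/eqP ->|bs] b0.
  by rewrite dotvDr dotvZr au add0r mulf_neq0 // ?gt_eqF.
rewrite dotvDr dotvZr.
have cb := IH b bs b0.
case: (eqVneq (dotv b a) 0) => [->|e0]; first by rewrite mulr0 addr0.
apply/eqP => Hz.
have : eps = - (dotv b u' / dotv b a).
  by apply: (mulIf e0); rewrite mulNr mulfVK //; apply/eqP; rewrite -addr_eq0 addrC Hz.
move=> Heps.
have := @sum_seq_ge _ s (fun b => `|dotv b u' / dotv b a|) b (fun x => normr_ge0 (dotv x u' / dotv x a)) bs.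
rewrite /= -normrN -Heps (ger0_norm (ltW eps0)) /eps => H.
lra.
Qed.

Lemma list_max (T : eqType) (s : seq T) (f : T -> R) x0 : x0 \in s ->
  exists2 p, p \in s & forall q, q \in s -> f q <= f p.
Proof.
elim: s x0 => [//|x s IH] x0 _.
case: (boolP (s == [::])) => [/eqP ->|].
  by exists x; rewrite ?mem_head // => q; rewrite mem_seq1 => /eqP ->.
case: s IH => [//|y s] IH _.
have [p ps Hp] := IH y (mem_head _ _).
case: (leP (f x) (f p)) => H.
  exists p; first by rewrite in_cons ps orbT.
  by move=> q; rewrite in_cons => /orP[/eqP ->|/Hp].
exists x; first exact: mem_head.
move=> q; rewrite in_cons => /orP[/eqP ->//|/Hp Hq].
by apply: le_trans Hq (ltW H).
Qed.

Lemma small_delta (T : eqType) (s : seq T) (a b : T -> R) :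
  (forall x, x \in s -> 0 <= a x /\ (a x = 0 -> 0 < b x)) ->
  exists2 del, 0 < del & forall x, x \in s -> 0 < a x + del * b x.
Proof.
elim: s => [|x s IH] H; first by exists 1.
have Hs : forall y, y \in s -> y \in x :: s by move=> y ys; rewrite in_cons ys orbT.
have [d0 d00 Hd0] := IH (fun y ys => H y (Hs y ys)).
have [ax0 axb] := H x (mem_head _ _).
pose dx := if 0 < a x then a x / (`|b x| + 1) else 1.
have dx0 : 0 < dx.
  rewrite /dx; case: ifP => // Ha; by rewrite divr_gt0 // ltr_pwDr.
exists (Order.min d0 dx); first by rewrite lt_min d00 dx0.
have dm0 : 0 < Order.min d0 dx by rewrite lt_min d00 dx0.
have dmd0 : Order.min d0 dx <= d0 by rewrite ge_min lexx.
have dmdx : Order.min d0 dx <= dx by rewrite ge_min lexx orbT.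
move: dm0 dmd0 dmdx; set q := Order.min d0 dx => q0 qd0 qdx.
move=> y; rewrite in_cons => /orP[/eqP ->|ys].
  case: (ltP 0 (a x)) => Ha.
    have hb : - b x <= `|b x| by rewrite -normrN ler_norm.
    have : q * (`|b x| + 1) <= a x.
      by rewrite -ler_pdivlMr ?ltr_pwDr //; move: qdx; rewrite /dx Ha.
    have := mulr_ge0 (ltW q0) (normr_ge0 (b x)).
    have : - (q * b x) <= q * `|b x| by rewrite -mulrN ler_wpM2l // ltW.
    move=> h1 h2 h3; nra.
  have -> : a x = 0 by apply/eqP; rewrite eq_le Ha ax0.
  by rewrite add0r mulr_gt0 // axb // ; apply/eqP; rewrite eq_le Ha ax0.
have [ay0 _] := H y (Hs y ys).
have Hy := Hd0 y ys.
have : 0 < d0 * (a y + q * b y).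
  have e : d0 * (a y + q * b y) = (d0 - q) * a y + q * (a y + d0 * b y) by ring.
  rewrite e; apply: ltr_wpDl; first by rewrite mulr_ge0 // subr_ge0.
  exact: mulr_gt0.
by rewrite pmulr_rgt0.
Qed.

Lemma conv_nth (pts : seq 'rV[R]_d) k : (k < size pts)%N -> conv pts (pts`_k).
Proof.
move=> Hk; pose k' := Ordinal Hk.
exists (fun i => (i == k')%:R); split; first by move=> i; rewrite ler0n.
split.
  by rewrite (bigD1 k') //= eqxx big1 ?addr0 // => i /negbTE ->.
rewrite (bigD1 k') //= eqxx scale1r big1 ?addr0 // => i /negbTE ->.
by rewrite scale0r.
Qed.

Lemma conv_mem (pts : seq 'rV[R]_d) p : p \in pts -> conv pts p.
Proof. by move=> pin; rewrite -(nth_index 0 pin); apply: conv_nth; rewrite index_mem. Qed.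

Lemma conv_le (pts : seq 'rV[R]_d) y g c : conv pts y ->
  (forall q, q \in pts -> dotv q g <= c) -> dotv y g <= c.
Proof.
move=> [lam [l0 [l1 ->]]] H.
rewrite dotv_suml.
have -> : c = \sum_k lam k * c by rewrite -mulr_suml l1 mul1r.
apply: ler_sum => k _; rewrite dotvZl ler_wpM2l //; apply: H.
exact: mem_nth.
Qed.

Lemma max_in_nc (pts : seq 'rV[R]_d) p g :
  (forall q, q \in pts -> dotv q g <= dotv p g) -> normal_cone (conv pts) p g.
Proof. by move=> H y cy; apply: conv_le cy H. Qed.

Definition full (S : {set 'I_n}) := forall z, (forall i, i \in S -> dotv z (v i) = 0) -> z = 0.

Variable Delta : {set {set 'I_n}}.
Hypothesis sf : simplicial_fan v Delta.

Lemma lin_indepD S : S \in Delta -> lin_indep v S.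
Proof. by case: sf => _ _ H _ _; apply: H. Qed.

Lemma v_neq0 i : v i != 0.
Proof.
apply/eqP => vi0; case: sf => _ _ H H4 _.
have h1 : forall j, j \notin [set i]%SET -> (j == i)%:R = 0 :> R.
  by move=> j; rewrite finset.in_set1 => /negbTE ->.
have h2 : \sum_j (j == i)%:R *: v j = 0 :> 'rV[R]_d.
  rewrite (sum_supp1 (i := i)) ?eqxx ?scale1r // => j /negbTE ->.
  by [].
have := H _ (H4 i) (fun j => (j == i)%:R) h1 h2 i.
by rewrite eqxx => /eqP; rewrite oner_eq0.
Qed.

Lemma gcone_vS (S : {set 'I_n}) (lam : 'I_n -> R) : (forall i, 0 <= lam i) -> (forall i, i \notin S -> lam i = 0) ->
  gcone v S (\sum_i lam i *: v i).
Proof. by move=> l0 ls; exists lam. Qed.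

Lemma ray_in (S : {set 'I_n}) t : S \in Delta -> gcone v S (v t) -> t \in S.
Proof.
move=> SD vtS.
case: sf => _ Hint Hli H4 H5.
have [_ [w [wle wF]]] := Hint _ _ (H4 t) SD.
have vtI : (gcone v [set t]%SET `&` gcone v S) (v t).
  by split => //; apply: gcone_gen; rewrite finset.in_set1.
move: (vtI); rewrite wF => -[_ /= wvt].
case: vtS => lam [l0 [ls vteq]].
have wvi : forall i, lam i * dotv w (v i) = 0.
  apply: sum_npos_eq0.
    move=> i; case: (boolP (i \in S)) => iS.
      by apply: mulr_ge0_le0 => //; apply: wle; apply: gcone_gen.
    by rewrite ls // mul0r.
  by rewrite -gcone_dot // -vteq.
have Hc : forall i, exists c : R, lam i != 0 -> 0 <= c /\ v i = c *: v t.
  move=> i; case: (boolP (lam i != 0)) => li; last by exists 0.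
  have iS : i \in S.
    by case: (boolP (i \in S)) => // iS'; move: li; rewrite ls // eqxx.
  have : (gcone v S `&` [set u | dotv w u = 0]) (v i).
    split; first exact: gcone_gen.
    by have := wvi i => /eqP; rewrite mulf_eq0 (negbTE li) /= => /eqP.
  by rewrite -wF => -[/gcone1 [c c0 ->] _]; exists c => _; split.
have [c Hc'] := @choice _ _ _ Hc.
have E : v t = (\sum_i lam i * c i) *: v t.
  rewrite {1}vteq scaler_suml; apply: eq_bigr => i _.
  case: (eqVneq (lam i) 0) => [->|li]; first by rewrite !scale0r mul0r scale0r.
  by have [_ ->] := Hc' i li; rewrite scalerA.
have s1 : \sum_i lam i * c i = 1.
  have : (1 - \sum_i lam i * c i) *: v t = 0 by rewrite scalerBl scale1r -E subrr.
  move/eqP; rewrite scaler_eq0 (negbTE (v_neq0 t)) orbF subr_eq0 => /eqP <-.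
  by [].
have [i Hi] : exists i, lam i * c i != 0.
  case: (pselect (exists i, lam i * c i != 0)) => // /forallNP H.
  move: s1; rewrite big1; first by move/eqP; rewrite eq_sym oner_eq0.
  by move=> j _; apply/eqP; apply/negPn/negP; exact: H j.
move: Hi; rewrite mulf_eq0 negb_or => /andP[li ci].
have [c0 vic] := Hc' i li.
have cpos : 0 < c i by rewrite lt_def ci c0.
have iS : i \in S.
  by case: (boolP (i \in S)) => // iS'; move: li; rewrite ls // eqxx.
have eqg : gcone v [set i]%SET = gcone v [set t]%SET.
  apply/seteqP; split => u /gcone1 [mu mu0 ->]; apply/gcone1.
    by exists (mu * c i); [rewrite mulr_ge0 | rewrite vic scalerA].
  exists (mu / c i); first by rewrite divr_ge0 // ltW.
  by rewrite vic scalerA mulfVK // gt_eqF.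
by rewrite -(H5 _ _ eqg).
Qed.

Lemma gcone_dot0 (S : {set 'I_n}) z w : (forall i, i \in S -> dotv z (v i) = 0) -> gcone v S w -> dotv z w = 0.
Proof.
move=> Hz [lam [l0 [ls ->]]]; rewrite gcone_dot // big1 // => i _.
by case: (boolP (i \in S)) => iS; [rewrite Hz // mulr0 | rewrite ls // mul0r].
Qed.

Hypothesis pt : polytopal v Delta.

Lemma full_cover u : exists S, [/\ S \in Delta, full S & gcone v S u].
Proof.
have [pts0 ne E] := pt.
have NF : forall p, conv pts0 p -> exists2 S, S \in Delta & normal_cone (conv pts0) p = gcone v S.
  move=> p cp; have : normal_fan (conv pts0) (normal_cone (conv pts0) p) by exists p.
  by rewrite E => -[S SD eq]; exists S.
have [x0 x0in] : exists x0, x0 \in pts0.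
  by case: pts0 ne {E NF} => // x s _; exists x; rewrite mem_head.
have [u' Hu'] := gen_dir [seq p - q | p <- pts0, q <- pts0].
have [p1 p1in Hp1] := list_max (fun q => dotv q u) x0in.
pose s' := [seq q <- pts0 | dotv q u == dotv p1 u].
have p1s' : p1 \in s' by rewrite mem_filter eqxx p1in.
have [p ps' Hp] := list_max (fun q => dotv q u') p1s'.
move: ps'; rewrite mem_filter => /andP[/eqP pu pin].
have Hq : forall q, q \in [seq q <- pts0 | q != p] ->
    0 <= dotv (p - q) u /\ (dotv (p - q) u = 0 -> 0 < dotv (p - q) u').
  move=> q; rewrite mem_filter => /andP[qp qin]; rewrite dotvBl; split.
    by rewrite subr_ge0 pu Hp1.
  move=> /eqP; rewrite subr_eq0 => /eqP equ.
  have qs' : q \in s' by rewrite mem_filter -equ pu eqxx qin.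
  have := Hp q qs'.
  have : dotv (p - q) u' != 0.
    apply: Hu'; last by rewrite subr_eq0 eq_sym.
    by apply/allpairsP; exists (p, q).
  rewrite dotvBl /= => H1 H2; rewrite lt_def H1 subr_ge0 H2.
  by [].
have [del del0 Hdel] := small_delta Hq.
pose g := u + del *: u'.
have Hg : forall q, q \in [seq q <- pts0 | q != p] -> 0 < dotv (p - q) g.
  by move=> q qin; rewrite /g dotvDr dotvZr; apply: Hdel.
have pcv : conv pts0 p by apply: conv_mem.
have [S SD NE] := NF p pcv.
have Nc : forall g', (forall q, q \in [seq q <- pts0 | q != p] -> 0 <= dotv (p - q) g') -> gcone v S g'.
  move=> g' Hg'; rewrite -NE; apply: max_in_nc => q qin.
  case: (eqVneq q p) => [->//|qp].
  by rewrite -subr_ge0 -dotvBl; apply: Hg'; rewrite mem_filter qp qin.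
exists S; split => //; last first.
  by apply: Nc => q qin; have [] := Hq q qin.
move=> z Hz.
have gz := gcone_dot0 Hz.
have Hq2 : forall q, q \in [seq q <- pts0 | q != p] ->
    0 <= dotv (p - q) g /\ (dotv (p - q) g = 0 -> 0 < dotv (p - q) z).
  move=> q qin; have := Hg q qin => H; split; first exact: ltW.
  by move=> H0; move: H; rewrite H0 ltxx.
have [eps eps0 Heps] := small_delta Hq2.
have g1 := gz _ (Nc g (fun q qin => ltW (Hg q qin))).
have g2 := gz _ (Nc (g + eps *: z) (fun q qin => ltac:(rewrite dotvDr dotvZr; exact: ltW (Heps q qin)))).
move: g2; rewrite dotvDr dotvZr g1 add0r => /eqP; rewrite mulf_eq0 gt_eqF //=.
by move=> /eqP; apply: dotvv_eq0.
Qed.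

End Geo.


Section Key.
Variables (R : realType) (d n : nat) (v : 'I_n -> 'rV[R]_d).
Variable Delta : {set {set 'I_n}}.
Hypothesis sf : simplicial_fan v Delta.
Hypothesis pt : polytopal v Delta.

Lemma face_gcone (S : {set 'I_n}) w : (forall i, i \in S -> dotv w (v i) <= 0) ->
  face_of (gcone v S) (gcone v S `&` [set x | dotv w x = 0]).
Proof.
move=> H; exists w; split => // x [lam [l0 [ls ->]]].
rewrite gcone_dot // sumr_le0 // => i _.
case: (boolP (i \in S)) => iS; last by rewrite ls // mul0r.
by apply: mulr_ge0_le0 => //; apply: H.
Qed.

Lemma coords_ex u : exists lam, is_coords v Delta u lam.
Proof.
have [S [SD _ [lam [l0 [ls ue]]]]] := full_cover pt u.
pose T := [set i | 0 < lam i]%SET.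
have li := lin_indepD sf SD.
pose w := xS v S (\col_i (if i \in T then 0 else -1)).
have wv i : i \in S -> dotv w (v i) = if i \in T then 0 else -1.
  by move=> iS; rewrite /w xS_dot // mxE.
have Hw : forall i, i \in S -> dotv w (v i) <= 0.
  by move=> i iS; rewrite wv //; case: ifP => _; [exact: lexx | rewrite lerN10].
have Hf := face_gcone Hw.
case: sf => face_cl _ _ _ _.
have [T' T'D FT'] := face_cl S SD _ Hf.
have TS : forall i, i \in T -> i \in S.
  move=> i; rewrite finset.inE => Hi; case: (boolP (i \in S)) => // iS.
  by move: Hi; rewrite ls // ltxx.
have TT' : T = T'.
  apply/setP => i; apply/idP/idP => Hi.
    apply: (ray_in sf T'D); rewrite -FT'; split; first by apply: gcone_gen; apply: TS.
    by rewrite /= wv ?TS // Hi.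
  have : (gcone v S `&` [set x | dotv w x = 0]) (v i) by rewrite FT'; apply: gcone_gen.
  move=> [/(ray_in sf SD) iS /=]; rewrite wv //; case: ifP => // _ /eqP.
  by rewrite oppr_eq0 oner_eq0.
exists (\col_i lam i); exists T; first by rewrite TT'.
split.
- by move=> i; rewrite finset.inE mxE.
- move=> i; rewrite finset.inE mxE -leNgt => H; apply/eqP; rewrite eq_le H l0.
  by [].
- by rewrite ue; apply: eq_bigr => i _; rewrite mxE.
Qed.

Lemma coords_spec u : is_coords v Delta u (coords v Delta u).
Proof. by apply: epsilon_spec; apply: coords_ex. Qed.


Lemma maximizer (pts : seq 'rV[R]_d) u : pts != [::] ->
  exists x, conv pts x /\ normal_cone (conv pts) x u.
Proof.
move=> ne; have [x0 x0in] : exists x0, x0 \in pts.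
  by case: pts ne => // x s _; exists x; rewrite mem_head.
have [p pin Hp] := list_max (fun q => dotv q u) x0in.
by exists p; split; [apply: conv_mem | apply: max_in_nc].
Qed.

Lemma sup_eq (P : set 'rV[R]_d) x u : P x -> normal_cone P x u -> suppf P u = dotv x u.
Proof.
move=> Px Nx; rewrite /suppf; apply/eqP; rewrite eq_le; apply/andP; split.
  apply: ge_sup; first by exists (dotv x u), x.
  by move=> r [y Py <-]; apply: Nx.
have hub : has_ubound [set dotv y u | y in P].
  by exists (dotv x u) => r [y Py <-]; apply: Nx.
by apply: ub_le_sup hub _ _; exists x.
Qed.

Lemma sup_ge (pts : seq 'rV[R]_d) y u : pts != [::] -> conv pts y ->
  dotv y u <= suppf (conv pts) u.
Proof.
move=> ne cy; have [x [cx Nx]] := maximizer u ne.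
by rewrite (sup_eq cx Nx); apply: Nx.
Qed.

Lemma lin_cone (pts : seq 'rV[R]_d) (S : {set 'I_n}) : pts != [::] -> coarsens v Delta (conv pts) ->
  S \in Delta -> exists x, conv pts x /\ (gcone v S `<=` normal_cone (conv pts) x).
Proof.
move=> ne co SD.
pose w := \sum_i (i \in S)%:R *: v i.
have wS : gcone v S w.
  exists (fun i => (i \in S)%:R); split; first by move=> i; rewrite ler0n.
  by split => // i /negbTE ->.
have [x [cx Nx]] := maximizer w ne.
exists x; split => //.
have [F [FD NF]] := co _ (ex_intro2 _ _ x cx erefl).
move: (Nx); rewrite NF => -[T TF wT].
have TD : T \in Delta by apply: (fintype.subsetP FD).
case: sf => _ Hint _ _ _.
have [[w' [w'le w'F]] _] := Hint _ _ SD TD.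
have wI : (gcone v S `&` gcone v T) w by [].
move: (wI); rewrite w'F => -[_ /= w'w].
have w'v : forall i, i \in S -> dotv w' (v i) = 0.
  have := @sum_npos_eq0 R n (fun i => (i \in S)%:R * dotv w' (v i)).
  move=> /(_ _ _) H i iS.
  have := H _ _ i.
  rewrite iS mul1r; apply.
  - move=> j; case: (boolP (j \in S)) => jS; last by rewrite mul0r.
    by rewrite mul1r; apply: w'le; apply: gcone_gen.
  - by rewrite -gcone_dot // -/w w'w.
move=> u uS; exists T => //.
have : (gcone v S `&` [set x | dotv w' x = 0]) u.
  by split => //=; apply: gcone_dot0 w'v uS.
by rewrite -w'F => -[].
Qed.

Lemma suppf_lin (pts : seq 'rV[R]_d) (S : {set 'I_n}) (lam : 'I_n -> R) : pts != [::] ->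
  coarsens v Delta (conv pts) -> S \in Delta ->
  (forall i, 0 <= lam i) -> (forall i, i \notin S -> lam i = 0) ->
  suppf (conv pts) (\sum_i lam i *: v i) = \sum_i lam i * suppf (conv pts) (v i).
Proof.
move=> ne co SD l0 ls.
have [x [cx Sx]] := lin_cone ne co SD.
rewrite (sup_eq cx (Sx _ (gcone_vS v l0 ls))) gcone_dot //.
apply: eq_bigr => i _; case: (boolP (i \in S)) => iS; last by rewrite ls // !mul0r.
by rewrite (sup_eq cx (Sx _ (gcone_gen v iS))).
Qed.

Lemma key_AU (pts : seq 'rV[R]_d) m (U : 'I_m -> 'rV[R]_d) k : pts != [::] ->
  coarsens v Delta (conv pts) ->
  (AU v Delta U *m supvec v (conv pts)) k 0 = suppf (conv pts) (U k).
Proof.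
move=> ne co.
have [S SD [Hp Hz Hu]] := coords_spec (U k).
rewrite [in RHS]Hu (suppf_lin ne co SD).
- by rewrite mxE; apply: eq_bigr => i _; rewrite !mxE.
- move=> i; case: (boolP (i \in S)) => iS; first exact: ltW (Hp i iS).
  by rewrite Hz.
- exact: Hz.
Qed.

End Key.


Section Main.
Variables (R : realType) (d n : nat) (v : 'I_n -> 'rV[R]_d).
Variable Delta : {set {set 'I_n}}.
Hypothesis sf : simplicial_fan v Delta.
Hypothesis pt : polytopal v Delta.

Lemma ls_obj_eq m (U : 'I_m -> 'rV[R]_d) (y : 'cV[R]_m) pts : in_defcone v Delta pts ->
  ls_obj U y (conv pts) = m%:R^-1 * nsq (AU v Delta U *m supvec v (conv pts) - y).
Proof.
move=> [ne co]; rewrite /ls_obj /nsq; congr (_ * _); apply: eq_bigr => k _.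
by rewrite !mxE -(key_AU sf pt U k ne co) mxE.
Qed.

Lemma lse_char m (U : 'I_m -> 'rV[R]_d) (y : 'cV[R]_m) :
  lse v Delta U y = [set h | defcone v Delta h /\ forall h', defcone v Delta h' ->
     enorm (AU v Delta U *m h - y) <= enorm (AU v Delta U *m h' - y)].
Proof.
apply/seteqP; split => h.
  move=> [pts [ip -> Hmin]]; split; first by exists pts.
  move=> h' [pts' ip' <-]; have := Hmin pts' ip'; rewrite !ls_obj_eq //.
  case: (posnP m) => [m0|mpos].
    by move=> _; subst m; rewrite /enorm /nsq !big_ord0.
  by rewrite ler_pM2l ?invr_gt0 ?ltr0n // -enorm_le.
move=> [[pts ip <-] Hmin]; exists pts; split => // pts' ip'.
rewrite !ls_obj_eq //; apply: ler_wpM2l; first by rewrite invr_ge0 ler0n.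
by rewrite -enorm_le; apply: Hmin; exists pts'.
Qed.


Definition Dcond (h : 'cV[R]_n) := forall S, S \in Delta -> full v S ->
  forall j, dotv (xS v S h) (v j) <= h j 0.

Lemma defcone_sub h : defcone v Delta h -> Dcond h.
Proof.
move=> [pts [ne co] <-] S SD fS j.
have [x [cx Sx]] := lin_cone sf ne co SD.
have li := lin_indepD sf SD.
have ex : xS v S (supvec v (conv pts)) = x.
  apply/eqP; rewrite -subr_eq0; apply/eqP; apply: fS => i iS.
  rewrite dotvBl xS_dot // mxE (sup_eq cx (Sx _ (gcone_gen v iS))) subrr.
  by [].
by rewrite ex mxE; apply: sup_ge.
Qed.

Lemma defcone_sup h : Dcond h -> defcone v Delta h.
Proof.
move=> Hh.
pose FS := [set Z in Delta | `[< full v Z >]]%SET.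
pose pts := [seq xS v Z h | Z <- enum FS].
have mem_pts : forall y, y \in pts -> exists S, [/\ S \in Delta, full v S & y = xS v S h].
  move=> y /mapP[Z]; rewrite mem_enum finset.inE => /andP[SD /asboolP fS] ->.
  by exists Z.
have xS_in : forall S, S \in Delta -> full v S -> xS v S h \in pts.
  move=> S SD fS; apply: map_f; rewrite mem_enum finset.inE SD /=.
  exact/asboolP.
have ne : pts != [::].
  have [Z [SD fS _]] := full_cover pt 0.
  by apply/eqP => E; move: (xS_in Z SD fS); rewrite E.
have ubj : forall y, conv pts y -> forall j, dotv y (v j) <= h j 0.
  move=> y cy j; apply: conv_le cy _ => q /mem_pts [S [SD fS ->]]; exact: Hh.
have ub_lin : forall y sig (lam : 'I_n -> R), conv pts y -> sig \in Delta ->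
    (forall i, 0 <= lam i) -> (forall i, i \notin sig -> lam i = 0) ->
    dotv y (\sum_i lam i *: v i) <= dotv (xS v sig h) (\sum_i lam i *: v i).
  move=> y sig lam cy sD l0 ls; rewrite !gcone_dot //; apply: ler_sum => i _.
  case: (boolP (i \in sig)) => iS; last by rewrite ls // !mul0r.
  rewrite (@xS_dot R d n v sig h i (lin_indepD sf sD) iS); apply: ler_wpM2l; [exact: l0 | exact: ubj].
have sv : supvec v (conv pts) = h.
  apply/matrixP => j k; rewrite (ord1 k) mxE.
  have [S [SD fS vjS]] := full_cover pt (v j).
  have jS := ray_in sf SD vjS.
  have cx : conv pts (xS v S h) by apply: conv_mem; apply: xS_in.
  have xj := @xS_dot R d n v S h j (lin_indepD sf SD) jS.
  have Nx : normal_cone (conv pts) (xS v S h) (v j).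
    by move=> y cy; rewrite xj; apply: ubj.
  by rewrite (sup_eq cx Nx) xj.
exists pts => //; split => // C [x cx ->].
exists [set T in Delta | `[< gcone v T `<=` normal_cone (conv pts) x >]]%SET; split.
  by apply/fintype.subsetP => T; rewrite finset.inE => /andP[].
apply/seteqP; split => u; last first.
  move=> [T]; rewrite finset.inE => /andP[_ /asboolP]; apply.
move=> Nu.
have [sig [sD fs [lam [l0 [ls ue]]]]] := full_cover pt u.
set xs := xS v sig h.
have cxs : conv pts xs by apply: conv_mem; apply: xS_in.
have Hle : forall u', gcone v sig u' -> forall y, conv pts y -> dotv y u' <= dotv xs u'.
  by move=> u' [lam' [l0' [ls' ->]]] y cy; apply: ub_lin.
have Hw : forall i, i \in sig -> dotv (x - xs) (v i) <= 0.
  by move=> i iS; rewrite dotvBl subr_le0; apply: Hle => //; apply: gcone_gen.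
have Hf := face_gcone Hw.
case: sf => face_cl _ _ _ _.
have [T TD FT] := face_cl _ sD _ Hf.
have uT : gcone v T u.
  rewrite -FT; split; first by rewrite ue; exists lam.
  rewrite /= dotvBl; apply/eqP; rewrite subr_eq0 eq_le; apply/andP; split.
    by apply: Hle cx; rewrite ue; exists lam.
  exact: Nu.
exists T => //; rewrite finset.inE TD /=; apply/asboolP.
move=> u'; rewrite -FT => -[u's /= u'0] y cy.
move: u'0; rewrite dotvBl => /eqP; rewrite subr_eq0 => /eqP ->.
exact: Hle.
Qed.

Lemma D_poly : exists k (C : 'M[R]_(k, n)),
  defcone v Delta = [set h | forall r, (C *m h) r 0 <= 0].
Proof.
pose cond (p : ({set 'I_n} * 'I_n)) := (p.1 \in Delta) && `[< full v p.1 >].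
pose ev (r : 'I_#|{: {set 'I_n} * 'I_n}|) : ({set 'I_n} * 'I_n) := enum_val r.
exists #|{: {set 'I_n} * 'I_n}|, (\matrix_(r, i) (if cond (ev r) then cr v (ev r).1 (ev r).2 0 i else 0)).
have Cm : forall (h : 'cV[R]_n) (r : 'I_#|{: {set 'I_n} * 'I_n}|),
    ((\matrix_(r, i) (if cond (ev r) then cr v (ev r).1 (ev r).2 0 i else 0)) *m h) r 0
    = if cond (ev r) then dotv (xS v (ev r).1 h) (v (ev r).2) - h (ev r).2 0 else 0.
  move=> h r; case Hc: (cond (ev r)).
    rewrite -(cr_mul v (ev r).1 (ev r).2 h) !mxE; apply: eq_bigr => i _; by rewrite mxE Hc.
  by rewrite mxE big1 // => i _; rewrite mxE Hc mul0r.
apply/seteqP; split => h.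
  move=> /defcone_sub Hh r; rewrite /= Cm; case: ifP => // /andP[SD /asboolP fS].
  by rewrite subr_le0; apply: Hh.
move=> Hh; apply: defcone_sup => S SD fS j.
have := Hh (enum_rank (S, j)); rewrite Cm /ev enum_rankK.
by rewrite /cond /= SD /=; case: asboolP => // _; rewrite subr_le0.
Qed.

End Main.

Unset Implicit Arguments.

Theorem theorem3p1 (R : realType) (d n m : nat) (v : 'I_n -> 'rV[R]_d)
  (Delta : {set {set 'I_n}}) (U : 'I_m -> 'rV[R]_d) (y : 'cV[R]_m) :
  simplicial_fan v Delta -> polytopal v Delta ->
  let A := AU v Delta U in
  let D := defcone v Delta in
  let ismin := fun z : 'cV[R]_m =>
    (exists2 h, D h & z = A *m h) /\
    (forall h, D h -> enorm (z - y) <= enorm (A *m h - y)) in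
  [/\ lse v Delta U y =
        [set h | D h /\ forall h', D h' -> enorm (A *m h - y) <= enorm (A *m h' - y)],
      (exists yh, ismin yh) /\ (forall z1 z2, ismin z1 -> ismin z2 -> z1 = z2),
      (forall yh, ismin yh -> lse v Delta U y = D `&` [set h | A *m h = yh]) &
      (exists h, lse v Delta U y h) /\ polyhedron (lse v Delta U y)].
Proof.
move=> sfH ptH A D ismin.
have [k [C HC]] := D_poly sfH ptH.
exact: (final HC (lse_char sfH ptH U y)).
Qed.
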